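(* Let $\mathcal{X}=\{x_0,x_1\}$, $\mathcal{Y}=\{0,1\}$, $\mathcal{H}=\{h_0,h_1\}$ with $h_0(x_0)=h_1(x_0)$, $h_0(x_1)=0$, $h_1(x_1)=1$. Let $\delta\in(0,1)$, $n\in\mathbb{N}$, $\epsilon=\sqrt{\log(1/\delta)/n}$ with $\epsilon<1/2$. For $\sigma\in\{0,1\}$ let $P^\sigma$ be the distribution with $P^\sigma_X(x_1)=1$, $P^\sigma(Y=\sigma\mid X=x_1)=1/2+\epsilon$, and $Q$ the distribution with $Q_X(x_1)=1$, $Q(Y=1\mid X=x_1)=1/2$. Draw $\sigma\sim\mathrm{Unif}(\{0,1\})$ and $t^*\sim\mathrm{Unif}([N])$ independently; then, independently for each $t\in[N]$, draw a dataset $Z_t$ of $n$ i.i.d. samples from $P^\sigma$ if $t=t^*$ and from $Q$ otherwise, and set $Z=(Z_1,\dots,Z_N)$. If $N\ge\delta^{-8}$, then for every learning algorithm $\mathcal{A}$ that maps $Z$ to an element of $\mathcal{H}$ (with no other input), $\mathbb{P}(\mathcal{A}(Z)\neq h_\sigma)\ge (2-\sqrt2)/4$, where $h_\sigma$ is the element of $\mathcal{H}$ with $h_\sigma(x_1)=\sigma$ (the common optimal classifier).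
   Context: The probability is over $\sigma$, $t^*$, and the samples. The target distribution is $\mathcal{D}=P^\sigma$. *)

(* Defs.v *)
From HB Require Import structures.
From mathcomp Require Import all_boot all_order all_algebra.
From mathcomp Require Import reals exp.
Set Implicit Arguments. Unset Strict Implicit. Unset Printing Implicit Defensive.
Import Order.TTheory GRing.Theory Num.Theory.
Local Open Scope ring_scope.

(* Instance space X = {x0, x1} encoded as bool: x0 = false, x1 = true.
   Label space Y = {0,1} encoded as bool.  A sample is a pair (x, y). *)
Definition x0 : bool := false.
Definition x1 : bool := true.

(* Hypothesis class H = {h_0, h_1}, indexed by bool:
   h_s x1 = s, and h_0 x0 = h_1 x0 (common value fixed to 0). *)
Definition hyp (s : bool) (x : bool) : bool := if x == x1 then s else false.

Definition dataset (N n : nat) := {ffun 'I_N -> {ffun 'I_n -> bool * bool}}.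

Definition eps {R : realType} (delta : R) (n : nat) : R :=
  Num.sqrt (ln (delta^-1) / n%:R).

(* Probability mass of one sample z = (x, y) in dataset t, given sigma and t*:
   P^sigma if t = t*, Q otherwise.  Both put all X-mass on x1. *)
Definition sample_pmf {R : realType} (e : R) (sigma : bool) (N : nat)
  (tstar t : 'I_N) (z : bool * bool) : R :=
  if z.1 == x1 then
    (if t == tstar then (if z.2 == sigma then 1/2 + e else 1/2 - e)
     else 1/2)
  else 0.

(* The algorithm A outputs the index s of the hypothesis h_s in H. *)
Definition err_prob {R : realType} (delta : R) (N n : nat)
  (A : dataset N n -> bool) : R :=
  \sum_(sigma : bool) \sum_(tstar : 'I_N) \sum_(Z : dataset N n)
    (1/2 * N%:R^-1 *
     (\prod_(t : 'I_N) \prod_(i : 'I_n) sample_pmf (eps delta n) sigma tstar t (Z t i)))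
    * ([exists x : bool, hyp (A Z) x != hyp sigma x])%:R.

(* Main.v *)
Require Import Defs.
From HB Require Import structures.
From mathcomp Require Import all_boot all_order all_algebra.
From mathcomp Require Import reals exp sequences.
From mathcomp Require Import ring lra.
Import Order.TTheory GRing.Theory Num.Theory.
Local Open Scope ring_scope.

Definition qz {R : realType} (y : bool * bool) : R := if y.1 then 1/2 else 0.
Definition rr {R : realType} (e : R) (a : bool) (y : bool * bool) : R :=
  if y.2 == a then 1 + 2 * e else 1 - 2 * e.
Definition QQ {R : realType} {N n : nat} (Z : dataset N n) : R :=
  \prod_t \prod_i qz (Z t i).
Definition LL {R : realType} (e : R) {N n : nat} (a : bool) (t : 'I_N) (Z : dataset N n) : R :=
  \prod_i rr e a (Z t i).

Lemma sumG {R : realType} (N n : nat) (f : 'I_N -> bool * bool -> R) :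
  \sum_(Z : dataset N n) \prod_t \prod_i f t (Z t i) = \prod_t (\sum_y f t y) ^+ n.
Proof.
rewrite -(bigA_distr_bigA (fun t (z : {ffun 'I_n -> bool * bool}) => \prod_i f t (z i))).
apply: eq_bigr => t _.
rewrite -(bigA_distr_bigA (fun (i : 'I_n) y => f t y)) /=.
by rewrite prodr_const card_ord.
Qed.

Lemma sum_pair {R : realType} (F : bool * bool -> R) :
  \sum_y F y = F (true, true) + F (true, false) + (F (false, true) + F (false, false)).
Proof.
transitivity (\sum_i \sum_j F (i, j)).
  by rewrite pair_big; apply: eq_big => [[]|[] []].
by rewrite !big_bool /= addrA.
Qed.

Lemma prod_if {R : realType} (N n : nat) (Z : dataset N n) (t : 'I_N) (h : bool * bool -> R) :
  \prod_s \prod_i (if s == t then h (Z s i) else 1) = \prod_i h (Z t i).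
Proof.
rewrite (bigD1 t) //= [X in _ * X]big1 ?mulr1.
  by apply: eq_bigr => i _; rewrite eqxx.
by move=> s /negbTE hs; apply: big1 => i _; rewrite hs.
Qed.

Lemma prod_split {R : realType} (N n : nat) (Z : dataset N n) (f g : 'I_N -> bool * bool -> R) :
  \prod_s \prod_i (f s (Z s i) * g s (Z s i)) =
  (\prod_s \prod_i f s (Z s i)) * \prod_s \prod_i g s (Z s i).
Proof.
rewrite -big_split /=; apply: eq_bigr => s _; by rewrite big_split.
Qed.

Lemma pmfE {R : realType} (e : R) sigma N (tstar t : 'I_N) z :
  sample_pmf e sigma tstar t z = qz z * (if t == tstar then rr e sigma z else 1).
Proof.
case: z => [[] y2]; rewrite /sample_pmf /qz /rr /x1 /= ?mul0r //.
case: (t == tstar); last by rewrite mulr1.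
by case: (y2 == sigma); field.
Qed.

Lemma prodP {R : realType} (e : R) sigma N n (tstar : 'I_N) (Z : dataset N n) :
  \prod_t \prod_i sample_pmf e sigma tstar t (Z t i) = QQ Z * LL e sigma tstar Z.
Proof.
under eq_bigr do under eq_bigr do rewrite pmfE.
rewrite (@prod_split _ _ _ Z (fun _ y => qz y) (fun s y => if s == tstar then rr e sigma y else 1)).
by rewrite prod_if.
Qed.

Lemma sumf {R : realType} (e : R) (u v a b : bool) :
  \sum_y qz y * ((if u then rr e a y else 1) * (if v then rr e b y else 1)) =
  if u && v then (if a == b then 1 + 4 * e ^+ 2 else 1 - 4 * e ^+ 2) else 1.
Proof.
rewrite sum_pair /qz /rr /=.
by case: u v a b => [] [] [] [] /=; field.
Qed.

Lemma Eab {R : realType} (e : R) N n a b (t t' : 'I_N) :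
  \sum_(Z : dataset N n) QQ Z * LL e a t Z * LL e b t' Z =
  if t == t' then (if a == b then (1 + 4 * e ^+ 2) ^+ n else (1 - 4 * e ^+ 2) ^+ n) else 1.
Proof.
transitivity (\sum_(Z : dataset N n) \prod_s \prod_i
  (qz (Z s i) * ((if s == t then rr e a (Z s i) else 1) * (if s == t' then rr e b (Z s i) else 1)))).
  apply: eq_bigr => Z _.
  rewrite (@prod_split _ _ _ Z (fun _ y => qz y) (fun s y => (if s == t then rr e a y else 1) * (if s == t' then rr e b y else 1))).
  rewrite (@prod_split _ _ _ Z (fun s y => if s == t then rr e a y else 1) (fun s y => if s == t' then rr e b y else 1)).
  by rewrite !prod_if /QQ /LL mulrA.
rewrite (@sumG _ N n (fun s y => qz y * ((if s == t then rr e a y else 1) * (if s == t' then rr e b y else 1)))).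
under eq_bigr do rewrite sumf.
have [<-|ne] := eqVneq t t'.
  rewrite (bigD1 t) //= eqxx [X in _ * X]big1 ?mulr1; first by case: (a == b).
  by move=> s /negbTE ->; rewrite expr1n.
by apply: big1 => s _; case: (eqVneq s t) => [->|]; rewrite ?(negbTE ne) ?andbF ?expr1n.
Qed.

Lemma Es {R : realType} (e : R) N n a (t : 'I_N) :
  \sum_(Z : dataset N n) QQ Z * LL e a t Z = 1.
Proof.
transitivity (\sum_(Z : dataset N n) \prod_s \prod_i
  (qz (Z s i) * ((if s == t then rr e a (Z s i) else 1) * (if false then rr e a (Z s i) else 1)))).
  apply: eq_bigr => Z _.
  rewrite (@prod_split _ _ _ Z (fun _ y => qz y) (fun s y => (if s == t then rr e a y else 1) * (if false then rr e a y else 1))).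
  rewrite (@prod_split _ _ _ Z (fun s y => if s == t then rr e a y else 1) (fun s y => if false then rr e a y else 1)).
  rewrite prod_if /QQ /LL.
  by rewrite [X in _ = _ * (_ * X)]big1 ?mulr1 // => s _; rewrite big1.
rewrite (@sumG _ N n (fun s y => qz y * ((if s == t then rr e a y else 1) * (if false then rr e a y else 1)))).
apply: big1 => s _; rewrite (_ : \sum_y _ = 1) ?expr1n //.
by have := sumf e (s == t) false a a; rewrite andbF.
Qed.

Lemma E1 {R : realType} N n : \sum_(Z : dataset N n) QQ Z = 1 :> R.
Proof.
rewrite /QQ (@sumG _ N n (fun _ y => qz y)); apply: big1 => s _.
rewrite sum_pair /qz /= (_ : 1/2 + 1/2 + (0 + 0) = 1 :> R) ?expr1n //.
by field.
Qed.

Lemma Eterm {R : realType} (e : R) N n (t t' : 'I_N) :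
  \sum_(Z : dataset N n) QQ Z * ((LL e true t Z - LL e false t Z) * (LL e true t' Z - LL e false t' Z)) =
  if t == t' then 2 * ((1 + 4 * e ^+ 2) ^+ n - (1 - 4 * e ^+ 2) ^+ n) else 0.
Proof.
transitivity (\sum_(Z : dataset N n) (((QQ Z * LL e true t Z * LL e true t' Z
   - QQ Z * LL e true t Z * LL e false t' Z) - QQ Z * LL e false t Z * LL e true t' Z)
   + QQ Z * LL e false t Z * LL e false t' Z)).
  by apply: eq_bigr => Z _; ring.
rewrite big_split /= !sumrB !Eab /=.
by case: (t == t'); ring.
Qed.

Definition KK {R : realType} (e : R) {N n : nat} (a : bool) (Z : dataset N n) : R :=
  \sum_t LL e a t Z.

Lemma Vlem {R : realType} (e : R) N n :
  \sum_(Z : dataset N n) QQ Z * (KK e true Z - KK e false Z) ^+ 2 =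
  N%:R * (2 * ((1 + 4 * e ^+ 2) ^+ n - (1 - 4 * e ^+ 2) ^+ n)).
Proof.
transitivity (\sum_(Z : dataset N n) \sum_t \sum_t'
   QQ Z * ((LL e true t Z - LL e false t Z) * (LL e true t' Z - LL e false t' Z))).
  apply: eq_bigr => Z _.
  rewrite /KK -sumrB expr2 big_distrl mulr_sumr /=; apply: eq_bigr => t _.
  by rewrite big_distrr mulr_sumr.
rewrite exchange_big /=.
under eq_bigr do rewrite exchange_big /=.
under eq_bigr do under eq_bigr do rewrite Eterm.
rewrite (eq_bigr (fun=> 2 * ((1 + 4 * e ^+ 2) ^+ n - (1 - 4 * e ^+ 2) ^+ n))).
  by rewrite sumr_const [RHS]mulr_natl card_ord.
move=> t _.
by rewrite (bigD1 t) //= eqxx big1 ?addr0 // => s /negbTE; rewrite eq_sym => ->.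
Qed.

Lemma hypE (a b : bool) : [exists x : bool, hyp a x != hyp b x] = (a != b).
Proof.
apply/existsP/idP => [[x]|ne].
  by rewrite /hyp; case: (x == x1) => //; case: (eqVneq a b) => // ->; rewrite eqxx.
by exists x1; rewrite /hyp eqxx.
Qed.

Lemma pw {R : realType} (a b k q : R) (c : bool) : 0 < k -> 0 <= q ->
  q * ((a + b) / 2) - q * ((a - b) ^+ 2 + k ^+ 2) / (4 * k) <= q * (if c then b else a).
Proof.
move=> k0 q0.
have h1 : `|a - b| <= ((a - b) ^+ 2 + k ^+ 2) / (2 * k).
  rewrite ler_pdivlMr ?mulr_gt0 //.
  have := real_normK (num_real (a - b)) => <-.
  have : 0 <= (`|a - b| - k) ^+ 2 by apply: sqr_ge0.
  nra.
have h2 : (a + b) / 2 - `|a - b| / 2 <= (if c then b else a).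
  have := ler_norm (a - b); have := ler_norm (b - a); rewrite distrC.
  case: c; lra.
have -> : q * ((a + b) / 2) - q * ((a - b) ^+ 2 + k ^+ 2) / (4 * k) =
          q * ((a + b) / 2 - ((a - b) ^+ 2 + k ^+ 2) / (2 * k) / 2).
  by field; exact: lt0r_neq0.
apply: ler_wpM2l => //; lra.
Qed.

Theorem theorem4p2 (R : realType) (delta : R) (n N : nat)
  (hdelta0 : 0 < delta) (hdelta1 : delta < 1) (hn : (0 < n)%N)
  (heps : eps delta n < 1/2)
  (hN : delta ^- 8 <= N%:R)
  (A : dataset N n -> bool) :
  (2 - Num.sqrt 2) / 4 <= err_prob delta A.
Proof.
have he0 : 0 <= eps delta n by apply: sqrtr_ge0.
have hN0 : (0 < N)%N.
  case: N hN A => // hN _; have : 0 < delta ^- 8 by rewrite invr_gt0 exprn_gt0.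
  lra.
set Nr : R := N%:R.
have Nr0 : 0 < Nr by rewrite ltr0n.
set e := eps delta n in he0 heps *.
have hdi : 1 <= delta^-1 by rewrite invf_ge1 // ltW.
have he2 : e ^+ 2 = ln (delta^-1) / n%:R by rewrite sqr_sqrtr // divr_ge0 // ln_ge0.
have hc : (1 + 4 * e ^+ 2) ^+ n <= Nr.
  apply: (le_trans (y := expR (4 * e ^+ 2) ^+ n)).
    by apply: lerXn2r; rewrite ?nnegrE ?expR_ge1Dx // ?addr_ge0 ?mulr_ge0 ?sqr_ge0 // ltW // expR_gt0.
  rewrite -expRM_natl he2 (_ : n%:R * (4 * (ln delta^-1 / n%:R)) = 4%:R * ln delta^-1); last first.
    by field; rewrite pnatr_eq0 -lt0n.
  rewrite expRM_natl lnK ?posrE ?invr_gt0 //.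
  apply: le_trans hN; rewrite -exprVn.
  by apply: ler_weXn2l.
have hV : \sum_(Z : dataset N n) QQ Z * (KK e true Z - KK e false Z) ^+ 2 <= 2 * Nr ^+ 2.
  rewrite Vlem -/Nr.
  have : 0 <= (1 - 4 * e ^+ 2) ^+ n by apply: exprn_ge0; nra.
  nra.
have hK a : \sum_(Z : dataset N n) QQ Z * KK e a Z = Nr.
  transitivity (\sum_(t < N) \sum_(Z : dataset N n) QQ Z * LL e a t Z).
    rewrite exchange_big /=; apply: eq_bigr => Z _; by rewrite /KK mulr_sumr.
  under eq_bigr do rewrite Es.
  by rewrite sumr_const card_ord.
have herr : err_prob delta A = 1/2 * Nr^-1 *
   \sum_(Z : dataset N n) QQ Z * (if A Z then KK e false Z else KK e true Z).
  rewrite /err_prob -/e.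
  under eq_bigr do under eq_bigr do under eq_bigr do rewrite prodP hypE.
  under eq_bigr do rewrite exchange_big /=.
  rewrite exchange_big /= mulr_sumr; apply: eq_bigr => Z _.
  rewrite big_bool /KK.
  case: (A Z) => /=; rewrite !mulr_sumr -big_split /=; apply: eq_bigr => t _ /=; ring.
have QQ0 (Z : dataset N n) : 0 <= QQ Z :> R.
  by apply: prodr_ge0 => t _; apply: prodr_ge0 => i _; rewrite /qz; case: (Z t i).1; lra.
set V := \sum_(Z : dataset N n) QQ Z * (KK e true Z - KK e false Z) ^+ 2 in hV.
set S := \sum_(Z : dataset N n) QQ Z * (if A Z then KK e false Z else KK e true Z) in herr.
set s := Num.sqrt (2 : R).
have s0 : 0 < s by rewrite sqrtr_gt0.
have ss : s ^+ 2 = 2 by rewrite sqr_sqrtr.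
set k := s * Nr.
have k0 : 0 < k by rewrite mulr_gt0.
have hS : Nr - (V + k ^+ 2) / (4 * k) <= S.
  have hle : \sum_(Z : dataset N n) (QQ Z * ((KK e true Z + KK e false Z) / 2) -
     QQ Z * ((KK e true Z - KK e false Z) ^+ 2 + k ^+ 2) / (4 * k)) <= S.
    by apply: ler_sum => Z _; apply: pw.
  apply: le_trans hle.
  rewrite sumrB.
  have -> : \sum_(Z : dataset N n) QQ Z * ((KK e true Z + KK e false Z) / 2) = Nr.
    transitivity ((\sum_(Z : dataset N n) QQ Z * KK e true Z + \sum_(Z : dataset N n) QQ Z * KK e false Z) / 2).
      by rewrite -big_split mulr_suml; apply: eq_bigr => Z _ /=; ring.
    by rewrite !hK; field.
  have -> : \sum_(Z : dataset N n) QQ Z * ((KK e true Z - KK e false Z) ^+ 2 + k ^+ 2) / (4 * k)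
            = (V + k ^+ 2) / (4 * k).
    transitivity ((V + k ^+ 2 * \sum_(Z : dataset N n) QQ Z) / (4 * k)).
      by rewrite /V mulr_sumr -big_split mulr_suml; apply: eq_bigr => Z _ /=; ring.
    by rewrite E1 mulr1.
  by [].
have hS2 : Nr * (2 - s) / 2 <= S.
  apply: le_trans hS.
  have : (V + k ^+ 2) / (4 * k) <= Nr * s / 2.
    rewrite ler_pdivrMr ?mulr_gt0 //.
    have -> : Nr * s / 2 * (4 * k) = 2 * s ^+ 2 * Nr ^+ 2 by rewrite /k; field.
    rewrite ss /k exprMn ss; nra.
  have -> : Nr * (2 - s) / 2 = Nr - Nr * s / 2 by field.
  lra.
rewrite herr.
have -> : 1 / 2 * Nr^-1 * S = S / (2 * Nr) by field; exact: lt0r_neq0.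
rewrite ler_pdivlMr ?mulr_gt0 //.
have -> : (2 - s) / 4 * (2 * Nr) = Nr * (2 - s) / 2 by field.
exact: hS2.
Qed.
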